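(* Let $d\in\mathbb{Z}_{\ge1}$, $\gamma\in\mathbb{Z}_{\ge2}$, and let integers $y(\ell),x^{\mathrm{bin}}(\ell),z(\ell)$ ($0\le\ell\le d-1$), $r(\ell)$ ($0\le\ell\le d$) form a solution of the constraint system $\mathcal{S}(d,\gamma)$. If $r(d)=\gamma^i$ for some integer $i$ with $1\le i\le 2^d-1$, then $(x^{\mathrm{bin}}(0),\dots,x^{\mathrm{bin}}(d-1))$ is the binary encoding of $i$, i.e. $i=\sum_{\ell=0}^{d-1}2^\ell x^{\mathrm{bin}}(\ell)$.
   Context: Constraint system $\mathcal{S}(d,\gamma)$: for given integers $d\ge1$, $\gamma\ge2$, integer variables $y(\ell),x^{\mathrm{bin}}(\ell),z(\ell)$ for $\ell\in\{0,\dots,d-1\}$ and $r(\ell)$ for $\ell\in\{0,\dots,d\}$, subject to, for every $\ell\in\{0,\dots,d-1\}$ (writing $g_\ell:=\gamma^{2^\ell}$): (C1) $y(\ell)\ge0$; (C2) $y(\ell)\le r(\ell+1)/g_\ell+1/(g_\ell+1)$; (C3) $y(\ell)\ge r(\ell+1)/g_\ell-(g_\ell-1)/g_\ell$; (C4) $x^{\mathrm{bin}}(\ell)\ge0$; (C5) $x^{\mathrm{bin}}(\ell)\le1$; (C6) $x^{\mathrm{bin}}(\ell)\le y(\ell)$; (C7) $y(\ell)\le(g_\ell+1)x^{\mathrm{bin}}(\ell)$; (C8) $r(\ell)\ge0$; (C9) $(g_\ell-1)z(\ell)+r(\ell)=r(\ell+1)$; (C10) $z(\ell)\ge0$; (C11)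 $z(\ell)\ge -g_\ell+g_\ell x^{\mathrm{bin}}(\ell)+r(\ell)$; (C12) $z(\ell)\le g_\ell x^{\mathrm{bin}}(\ell)$; (C13) $z(\ell)\le r(\ell)$; and additionally $r(0)=1$, $r(d)\ge2$, $r(d)\le\gamma^{2^d-1}$. *)

(* Defs.v *)
From mathcomp Require Import all_boot all_order all_algebra.
Set Implicit Arguments. Unset Strict Implicit. Unset Printing Implicit Defensive.
Import Order.TTheory GRing.Theory Num.Theory.
Local Open Scope ring_scope.

Definition gpow (gamma : int) (l : nat) : int := gamma ^+ (2 ^ l)%N.

(* The variables are integer-valued
   functions on nat; only the indices 0..d-1 (resp. 0..d for r) matter.
   Fractional constraints (C2),(C3) are interpreted over the rationals. *)
Definition system_S (d : nat) (gamma : int)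
  (y xbin z r : nat -> int) : Prop :=
  (forall l : nat, (l < d)%N ->
     let g := gpow gamma l in
     0 <= y l /\
         (y l)%:~R <= (r l.+1)%:~R / g%:~R + 1 / (g%:~R + 1) :> rat /\
         (y l)%:~R >= (r l.+1)%:~R / g%:~R - (g%:~R - 1) / g%:~R :> rat /\
         0 <= xbin l /\
         xbin l <= 1 /\
         xbin l <= y l /\
         y l <= (g + 1) * xbin l /\
         0 <= r l /\
         (g - 1) * z l + r l = r l.+1 /\
         0 <= z l /\
         z l >= - g + g * xbin l + r l /\
         z l <= g * xbin l
       /\ z l <= r l)
  /\ r 0%N = 1
  /\ 2 <= r d
  /\ r d <= gamma ^+ (2 ^ d - 1)%N.

(* Main.v *)
Require Import Defs.
From mathcomp Require Import all_boot all_order all_algebra.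
From mathcomp Require Import zify ring.
Import Order.TTheory GRing.Theory Num.Theory.
Local Open Scope ring_scope.

Theorem mainTheorem7 (d : nat) (gamma : int) (y xbin z r : nat -> int) (i : nat) :
  (1 <= d)%N -> 2 <= gamma ->
  system_S d gamma y xbin z r ->
  (1 <= i)%N -> (i <= 2 ^ d - 1)%N ->
  r d = gamma ^+ i ->
  (i%:Z = \sum_(l < d) (2 ^ l)%N%:Z * xbin l).
Proof.
move=> _ hg [C [r0 _]] _ _ rd.
pose s (l : nat) : nat := (\sum_(k < l) 2 ^ k * `|xbin k|)%N.
have key : forall l, (l <= d)%N -> r l = gamma ^+ s l.
  elim=> [|l IH] hl; first by rewrite /s big_ord0 r0.
  have hld : (l < d)%N by [].
  have := C l hld; rewrite /= -/(gpow gamma l).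
  move=> [_ [_ [_ [x0 [x1 [_ [_ [_ [c9 [c10 [c11 [c12 c13]]]]]]]]]]]].
  rewrite /s big_ord_recr /= -/(s l).
  have [x0'|x1'] : xbin l = 0 \/ xbin l = 1 by clear -x0 x1; lia.
  - rewrite x0' mulr0 in c11 c12.
    have z0 : z l = 0 by clear -c10 c12; lia.
    rewrite -c9 z0 mulr0 add0r IH; last exact: ltnW.
    by rewrite x0' (_ : absz 0 = 0%N); [rewrite muln0 addn0|].
  - rewrite x1' mulr1 in c11 c12.
    have zr : z l = r l by clear -c11 c13; lia.
    rewrite -c9 zr IH; last exact: ltnW.
    rewrite /gpow x1' (_ : absz 1 = 1%N); last by [].
    by rewrite muln1 exprD mulrBl mul1r subrK mulrC.
have hs : s d = i.
  apply: (@ieexprIn _ gamma).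
  - by apply: lt_le_trans hg.
  - by rewrite gt_eqF // (lt_le_trans _ hg).
  by rewrite -key // rd.
rewrite -hs /s -natz natr_sum; apply: eq_bigr => k _.
have [_ [_ [_ [x0 _]]]] := C k (ltn_ord k).
by rewrite natrM !natz gez0_abs.
Qed.
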